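(* Let $\mathcal{M}$ be the set of compactly supported probability distributions on $\mathbb{R}$ and let $\mathcal{U}=\{T^u: u \text{ a utility function}\}$. Let $T:\mathcal{M}\to\mathcal{M}$ be monotone. Then $\mathcal{U}\circ T=T\circ\mathcal{U}$ if and only if $T=T_d\circ T^u$ for some distortion function $d$ and some utility function $u$ that is strictly increasing and surjective ($u(\mathbb{R})=\mathbb{R}$).
   Context: Increasing means non-decreasing. A distortion function is an increasing function $d:[0,1]\to[0,1]$ with $d(0)=0$, $d(1)=1$. A utility function is an increasing continuous $u:\mathbb{R}\to\mathbb{R}$. $T_d(F)(x)=\lim_{y\downarrow x}d(F(y))$; $T^u(F)=F\circ u^{-1}$ is the distribution of $u(X)$ when $X\sim F$. For a set $\mathcal{T}$ of maps $\mathcal{M}\to\mathcal{M}$, $\mathcal{T}\circ T=\{T'\circ T:T'\in\mathcal{T}\}$ and $T\circ\mathcal{T}=\{T\circ T':T'\in\mathcal{T}\}$. For $F,G\in\mathcal{M}$, $F\le_{\rm st}G$ means $F(x)\ge G(x)$ for all $x$; $T$ is monotone if $F\le_{\rm st}G$ implies $T(F)\le_{\rm st}T(G)$. *)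

(* Defs.v *)
From HB Require Import structures.
From mathcomp Require Import all_boot all_order all_algebra.
From mathcomp Require Import all_classical all_reals all_analysis.
Set Implicit Arguments. Unset Strict Implicit. Unset Printing Implicit Defensive.
Import Order.TTheory GRing.Theory Num.Theory.
Import numFieldNormedType.Exports.
Local Open Scope classical_set_scope.
Local Open Scope ring_scope.

Section Defs.
Variable R : realType.

(* A distribution on R is represented by its CDF F : R -> R. *)
Definition in_M (F : R -> R) : Prop :=
  {homo F : x y / x <= y} /\
  (forall x, F y @[y --> x^'+] --> F x) /\
  exists a b : R, (forall x, x < a -> F x = 0) /\ (forall x, b <= x -> F x = 1).

(* Distortion function d : [0,1] -> [0,1] (values outside [0,1] irrelevant). *)
Definition distortion (d : R -> R) : Prop :=
  (forall x y, 0 <= x -> x <= y -> y <= 1 -> d x <= d y) /\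
  (forall x, 0 <= x -> x <= 1 -> 0 <= d x /\ d x <= 1) /\
  d 0 = 0 /\ d 1 = 1.

Definition utility (u : R -> R) : Prop :=
  {homo u : x y / x <= y} /\ continuous u.

Definition st_le (F G : R -> R) : Prop := forall x, G x <= F x.

Definition monotone_op (T : (R -> R) -> (R -> R)) : Prop :=
  forall F G, in_M F -> in_M G -> st_le F G -> st_le (T F) (T G).

Definition Td (d : R -> R) (F : R -> R) : R -> R :=
  fun x => lim ((d \o F) @ x^'+).

(* T^u(F) = F o u^{-1}: the CDF of u(X) when X ~ F, i.e.
   P(u(X) <= y) = P(X \in {x | u x <= y}); for continuous increasing u the
   set {x | u x <= y} is empty, all of R, or a closed half-line (-oo, a],
   so this probability is sup {F x | u x <= y} (and 0 if the set is empty). *)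
Definition Tu (u : R -> R) (F : R -> R) : R -> R :=
  fun y => if pselect (exists x, u x <= y)
           then sup (F @` [set x | u x <= y]) else 0.

Definition eq_on_M (T1 T2 : (R -> R) -> (R -> R)) : Prop :=
  forall F, in_M F -> T1 F = T2 F.

Definition UT_eq_TU (T : (R -> R) -> (R -> R)) : Prop :=
  (forall u, utility u -> exists v, utility v /\
      eq_on_M (fun F => Tu u (T F)) (fun F => T (Tu v F))) /\
  (forall v, utility v -> exists u, utility u /\
      eq_on_M (fun F => Tu u (T F)) (fun F => T (Tu v F))).

End Defs.

(* Main.v *)
Require Import Defs.
From HB Require Import structures.
From mathcomp Require Import all_boot all_order all_algebra.
From mathcomp Require Import all_classical all_reals all_analysis.
Import Order.TTheory GRing.Theory Num.Theory.
Import numFieldNormedType.Exports.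
Local Open Scope classical_set_scope.
Local Open Scope ring_scope.

Lemma inM_01 {R : realType} {F : R -> R} : in_M F -> forall x, 0 <= F x <= 1.
Proof.
case=> hm [_ [a [b [ha hb]]]] x.
have F0 : F (a - 1) = 0 by apply: ha; rewrite ltrBlDr ltrDl.
have F1 : F (b + 1) = 1 by apply: hb; rewrite lerDl.
apply/andP; split.
  have [xa|ax] := ltP x a; first by rewrite ha.
  by rewrite -F0; apply: hm; rewrite lerBlDr (le_trans ax) // lerDl.
have [xb|bx] := ltP x b; last by rewrite hb.
by rewrite -F1; apply: hm; rewrite (le_trans (ltW xb)) // lerDl.
Qed.

Lemma Tu_ge {R : realType} (u F : R -> R) t z :
  (forall x, F x <= 1) -> u z <= t -> F z <= Tu u F t.
Proof.
move=> F1 uz; rewrite /Tu; case: pselect => [hp|hn]; last by exfalso; apply: hn; exists z.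
apply: sup_upper_bound; last by exists z.
split; first by exists (F z), z.
by exists 1 => _ [x _ <-].
Qed.

Lemma Tu_le {R : realType} (u F : R -> R) t c :
  0 <= c -> (forall z, u z <= t -> F z <= c) -> Tu u F t <= c.
Proof.
move=> c0 hc; rewrite /Tu; case: pselect => // -[z hz].
apply: ge_sup; first by exists (F z), z.
by move=> _ [x hx <-]; apply: hc.
Qed.

Lemma Tu_ge0 {R : realType} (u F : R -> R) t :
  (forall x, 0 <= F x <= 1) -> 0 <= Tu u F t.
Proof.
move=> F01; have [[z hz]|hn] := pselect (exists z, u z <= t).
  have h1 : 0 <= F z by case/andP: (F01 z).
  have h2 : F z <= Tu u F t by apply: Tu_ge hz => x; case/andP: (F01 x).
  exact: le_trans h1 h2.
by rewrite /Tu; case: pselect.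
Qed.

Definition B {R : realType} (a b q : R) : R -> R :=
  fun t => if t < a then 0 else if t < b then q else 1.

Lemma B_mono {R : realType} (a b q : R) : a <= b -> 0 <= q <= 1 ->
  {homo B a b q : x y / x <= y}.
Proof.
move=> ab /andP[q0 q1] x y xy; rewrite /B.
have [ya|ay] := ltP y a; first by rewrite (le_lt_trans xy ya).
have [xa|ax] := ltP x a; first by case: ifP.
have [yb|by_] := ltP y b; first by rewrite (le_lt_trans xy yb).
by case: ifP.
Qed.

Lemma B_01 {R : realType} (a b q : R) : 0 <= q <= 1 -> forall x, 0 <= B a b q x <= 1.
Proof. by move=> hq x; rewrite /B; case: ifP => _; [|case: ifP => _]; rewrite ?lexx ?ler01. Qed.

Lemma B_inM {R : realType} (a b q : R) : a <= b -> 0 <= q <= 1 -> in_M (B a b q).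
Proof.
move=> ab q01; split; first exact: B_mono.
split.
  move=> x; apply: cvg_near_cst; rewrite /B.
  have [xa|ax] := ltP x a.
    near=> y; have ya : y < a by near: y; exact: nbhs_right_lt.
    by rewrite ya.
  have [xb|bx] := ltP x b.
    near=> y; have yb : y < b by near: y; exact: nbhs_right_lt.
    have xy : x <= y by near: y; exact: nbhs_right_ge.
    have ay : (y < a) = false by apply/negbTE; rewrite -leNgt (le_trans ax xy).
    by rewrite ay yb.
  near=> y; have xy : x <= y by near: y; exact: nbhs_right_ge.
  have ay : (y < a) = false by apply/negbTE; rewrite -leNgt (le_trans ax xy).
  have by_ : (y < b) = false by apply/negbTE; rewrite -leNgt (le_trans bx xy).
  by rewrite ay by_.
exists a, b; split => x hx; rewrite /B ?hx //.
rewrite ifF ?ifF //; apply/negbTE; rewrite -leNgt //.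
exact: le_trans ab hx.
Unshelve. all: end_near.
Qed.

Lemma TuB {R : realType} (v : R -> R) (a b q : R) : {homo v : x y / x <= y} ->
  a <= b -> 0 <= q <= 1 -> Tu v (B a b q) = B (v a) (v b) q.
Proof.
move=> vm ab q01; have B01 := @B_01 _ a b q q01.
have B1 x : B a b q x <= 1 by case/andP: (B01 x).
have B0 x : 0 <= B a b q x by case/andP: (B01 x).
case/andP: (q01) => q0 q1.
apply/funext => t; rewrite {2}/B.
have [ta|at_] := ltP t (v a).
  apply/le_anti; rewrite Tu_ge0 // andbT; apply: Tu_le => // z vz.
  rewrite /B ifT //; rewrite ltNge; apply/negP => az.
  by have := vm _ _ az; rewrite leNgt (le_lt_trans vz ta).
have [tb|bt] := ltP t (v b).
  have a_b : a < b.
    rewrite lt_neqAle ab andbT; apply/negP => /eqP eab.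
    by move: tb; rewrite -eab ltNge at_.
  apply/le_anti; apply/andP; split.
    apply: Tu_le => // z vz; rewrite /B; case: ifP => // _.
    rewrite ifT //; rewrite ltNge; apply/negP => bz.
    by have := vm _ _ bz; rewrite leNgt (le_lt_trans vz tb).
  have := @Tu_ge _ v (B a b q) t a B1 at_; by rewrite /B ltxx a_b.
apply/le_anti; apply/andP; split; first by apply: Tu_le => // z _.
have := @Tu_ge _ v (B a b q) t b B1 bt; rewrite /B ltxx ifF //.
by apply/negbTE; rewrite -leNgt.
Qed.

From mathcomp Require Import lra.

Lemma mono_surj_cont {R : realType} (f : R -> R) : {homo f : x y / x <= y} ->
  (forall z, exists x, f x = z) -> continuous f.
Proof.
move=> fm fs x; apply/cvgrPdist_lt => e e0.
have [x1 hx1] := fs (f x - e / 2); have [x2 hx2] := fs (f x + e / 2).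
have x1x : x1 < x.
  rewrite ltNge; apply/negP => /fm; rewrite hx1 => h; lra.
have xx2 : x < x2.
  rewrite ltNge; apply/negP => /fm; rewrite hx2 => h; lra.
have xin : x \in `]x1, x2[ by rewrite in_itv /= x1x xx2.
near=> z.
have : z \in `]x1, x2[ by near: z; exact: near_in_itvoo.
rewrite in_itv /= => /andP[h1 h2].
have := fm _ _ (ltW h1); have := fm _ _ (ltW h2); rewrite hx1 hx2 => k2 k1.
rewrite ltr_norml; apply/andP; split; lra.
Unshelve. all: end_near.
Qed.

Lemma dl_inj {R : realType} (c c' : R) : B c c 1 = B c' c' 1 -> c = c'.
Proof.
move=> e; have e1 : B c c 1 c = B c' c' 1 c by rewrite e.
have e2 : B c c 1 c' = B c' c' 1 c' by rewrite e.
move: e1 e2; rewrite /B /= !ltxx.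
case: ltP => h1; first by clear e; move=> h; exfalso; lra.
case: ltP => h2 _; first by clear e; move=> h; exfalso; lra.
by move=> _; apply/le_anti; rewrite h1 h2.
Qed.

Lemma dl_le {R : realType} {a b : R} : a <= b -> forall x, B b b 1 x <= B a a 1 x.
Proof.
move=> ab x; rewrite /B; case: ltP => hb; case: ltP => ha //; rewrite ?lexx ?ler01 //.
by move: (le_lt_trans (le_trans ab hb) ha); rewrite ltxx.
Qed.

Lemma utility_cst {R : realType} (c : R) : utility (fun _ : R => c).
Proof. by split; [move=> ? ? _; exact: lexx | exact: cst_continuous]. Qed.

Lemma Tu_cst {R : realType} (c : R) (G : R -> R) : in_M G -> Tu (fun _ => c) G = B c c 1.
Proof.
move=> hG; have G01 := inM_01 hG.
have G1 x : G x <= 1 by case/andP: (G01 x).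
case: (hG) => _ [_ [a [b [_ hb]]]].
apply/funext => t; rewrite /B; case: ltP => tc.
  apply/le_anti; rewrite Tu_ge0 // andbT; apply: Tu_le => // z; by rewrite leNgt tc.
apply/le_anti; apply/andP; split; first by apply: Tu_le => // z _.
by have := @Tu_ge _ (fun _ => c) G t b G1 tc; rewrite hb.
Qed.

Lemma dl_exists {R : realType} (T : (R -> R) -> (R -> R))
  (hTM : forall F, in_M F -> in_M (T F))
  (h1 : forall u, utility u -> exists v, utility v /\
      eq_on_M (fun F => Tu u (T F)) (fun F => T (Tu v F))) c :
  exists y, T (B y y 1) = B c c 1.
Proof.
have [v [[vm _] hv]] := h1 _ (utility_cst c).
have hB : in_M (B 0 0 1 : R -> R) by apply: B_inM; rewrite ?lexx ?ler01.
have := hv _ hB; rewrite /= Tu_cst ?TuB ?lexx ?ler01 //; last exact: hTM.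
by move=> e; exists (v 0).
Qed.

Lemma rlim_unique {R : realType} (f : R -> R) (x a b : R) :
  f y @[y --> x^'+] --> a -> f y @[y --> x^'+] --> b -> a = b.
Proof.
by move=> ha hb; rewrite -(cvg_lim (@Rhausdorff R) ha) -(cvg_lim (@Rhausdorff R) hb).
Qed.

Lemma dl_all {R : realType} (T : (R -> R) -> (R -> R))
  (hTM : forall F, in_M F -> in_M (T F)) (hTmono : monotone_op T)
  (hex : forall c : R, exists y, T (B y y 1) = B c c 1) y :
  exists c, T (B y y 1) = B c c 1.
Proof.
have hBy : in_M (B y y 1) by apply: B_inM; rewrite ?lexx ?ler01.
set G := T (B y y 1).
have hG : in_M G by exact: hTM.
have G01 := inM_01 hG.
have G0 x : 0 <= G x by case/andP: (G01 x).
have G1 x : G x <= 1 by case/andP: (G01 x).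
case: (hG) => Gm [Grc [a [b [ha hb]]]].
have dich c : (forall t, t < c -> G t = 0) \/ (forall t, c <= t -> G t = 1).
  have [yc hyc] := hex c.
  have hBc : in_M (B yc yc 1) by apply: B_inM; rewrite ?lexx ?ler01.
  have [ycy|yyc] := leP yc y.
    left => t tc; apply/le_anti; rewrite G0 andbT.
    have := hTmono _ _ hBc hBy (dl_le ycy) t; rewrite hyc /B tc //.
  right => t ct; apply/le_anti; rewrite G1 /=.
  have := hTmono _ _ hBy hBc (dl_le (ltW yyc)) t; rewrite hyc /B ltNge ct //.
set S := [set t | G t = 0].
have S0 : S (a - 1) by apply: ha; rewrite ltrBlDr ltrDl.
have Sub : ubound S b.
  move=> t St; rewrite leNgt; apply/negP => bt.
  by move: St; rewrite /S /= hb ?(ltW bt) //; move=> h; clear -h; lra.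
have hs : has_sup S by split; [exists (a - 1) | exists b].
set cs := sup S.
have gt t : cs < t -> G t = 1.
  move=> ct; case: (dich t) => [h|h]; last exact: h.
  have : S ((cs + t) / 2) by apply: h; lra.
  move/(sup_upper_bound hs) => h'; rewrite -/cs in h'; exfalso; lra.
have lt t : t < cs -> G t = 0.
  move=> tc; have e0 : 0 < cs - t by rewrite subr_gt0.
  have [e Se te] := sup_adherent e0 hs; rewrite -/cs in te.
  apply/le_anti; rewrite G0 andbT -Se; apply: Gm; lra.
have eq t : t = cs -> G t = 1.
  move=> ->; have h := @rlim_unique R G cs _ 1 (Grc cs); apply: h; apply: cvg_near_cst.
  near=> z; apply: gt; near: z; exact: nbhs_right_gt.
exists cs; apply/funext => t; rewrite /B.
have [tc|ct] := ltP t cs; first exact: lt.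
have [e|ne] := eqVneq t cs; first exact: eq.
by apply: gt; rewrite lt_neqAle ct eq_sym ne.
Unshelve. all: end_near.
Qed.

Lemma affine_util {R : realType} (a b p q : R) : a < b -> p < q ->
  exists v : R -> R, [/\ utility v, (forall x y, x < y -> v x < v y), v a = p & v b = q].
Proof.
move=> ab pq; set k := (q - p) / (b - a).
have k0 : 0 < k by apply: divr_gt0; rewrite subr_gt0.
exists (fun z => p + (z - a) * k); split.
- split.
    move=> x y xy; rewrite lerD2l ler_pM2r // lerD2r //.
  move=> x; apply: cvgD; first exact: cvg_cst.
  apply: cvgM; last exact: cvg_cst.
  apply: cvgB; [exact: cvg_id | exact: cvg_cst].
- by move=> x y xy; rewrite ltrD2l ltr_pM2r // ltrD2r.
- by rewrite subrr mul0r addr0.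
- rewrite /k mulrCA mulfV ?mulr1 ?subrKC //; by rewrite subr_eq0 gt_eqF.
Qed.

Lemma B1_inM {R : realType} (x : R) : in_M (B x x 1).
Proof. by apply: B_inM; rewrite ?lexx ?ler01. Qed.

Lemma comm_phi {R : realType} {T : (R -> R) -> (R -> R)} {phi u v : R -> R}
  (hphi : forall y, T (B y y 1) = B (phi y) (phi y) 1)
  (hu : utility u) (hv : utility v)
  (h : eq_on_M (fun F => Tu u (T F)) (fun F => T (Tu v F))) x :
  u (phi x) = phi (v x).
Proof.
have := h _ (B1_inM x); rewrite /= hphi TuB ?lexx ?ler01 //; last by case: hu.
by rewrite TuB ?lexx ?ler01 // ?hphi; [move/dl_inj | case: hv].
Qed.

Lemma phi_strict {R : realType} (T : (R -> R) -> (R -> R)) (phi : R -> R)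
  (hphi : forall y, T (B y y 1) = B (phi y) (phi y) 1)
  (phim : {homo phi : x y / x <= y})
  (phis : forall z, exists x, phi x = z)
  (h2 : forall v, utility v -> exists u, utility u /\
      eq_on_M (fun F => Tu u (T F)) (fun F => T (Tu v F))) :
  forall x y, x < y -> phi x < phi y.
Proof.
move=> a b ab; rewrite lt_neqAle phim ?(ltW ab) // andbT; apply/negP => /eqP e.
have [p hp] := phis 0; have [q hq] := phis 1.
have pq : p < q.
  rewrite ltNge; apply/negP => /phim; rewrite hp hq; apply/negP; rewrite -ltNge ltr01 //.
have [v [hv _ va vb]] := affine_util _ _ _ _ ab pq.
have [u [hu huv]] := h2 _ hv.
have := comm_phi hphi hu hv huv a; have := comm_phi hphi hu hv huv b.
rewrite va vb hp hq e => -> h; clear -h; lra.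
Qed.

Lemma strict_refl {R : realType} {f : R -> R} : (forall x y, x < y -> f x < f y) ->
  forall x y, f x <= f y -> x <= y.
Proof.
move=> fs x y; rewrite leNgt => /negP h; rewrite leNgt; apply/negP => yx; apply: h; exact: fs.
Qed.

Lemma strict_mono {R : realType} {f : R -> R} : (forall x y, x < y -> f x < f y) ->
  {homo f : x y / x <= y}.
Proof.
move=> fs x y; rewrite le_eqVlt => /orP[/eqP->|/fs/ltW //]; exact: lexx.
Qed.

Lemma Tu_hom {R : realType} (phi psi G : R -> R) :
  (forall x y, x < y -> phi x < phi y) -> (forall y, phi (psi y) = y) ->
  {homo G : x y / x <= y} -> (forall x, 0 <= G x <= 1) ->
  Tu phi G = fun y => G (psi y).
Proof.
move=> phs hpsi Gm G01; apply/funext => y.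
have G1 x : G x <= 1 by case/andP: (G01 x).
have G0 x : 0 <= G x by case/andP: (G01 x).
apply/le_anti/andP; split.
  apply: Tu_le => // z hz; apply: Gm; apply: (strict_refl phs); by rewrite hpsi.
by apply: Tu_ge => //; rewrite hpsi.
Qed.

Lemma left_val {R : realType} {T : (R -> R) -> (R -> R)} {phi psi : R -> R}
  (hTM : forall F, in_M F -> in_M (T F))
  (hphi : forall y, T (B y y 1) = B (phi y) (phi y) 1)
  (phs : forall x y, x < y -> phi x < phi y)
  (hpsi : forall y, phi (psi y) = y)
  (h2 : forall v, utility v -> exists u, utility u /\
      eq_on_M (fun F => Tu u (T F)) (fun F => T (Tu v F)))
  a b q : a < b -> 0 <= q <= 1 -> T (B a b q) (phi a) = T (B 0 1 q) (phi 0).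
Proof.
move=> ab q01.
have [v [hv vst v0 v1]] := affine_util _ _ _ _ (@ltr01 R) ab.
have [u [hu huv]] := h2 _ hv.
have cm := comm_phi hphi hu hv huv.
have hB : in_M (B 0 1 q) by apply: B_inM; rewrite ?ler01.
have e : T (B a b q) = Tu u (T (B 0 1 q)).
  rewrite (huv _ hB) /= TuB ?ler01 // ?v0 ?v1 //; by case: hv.
rewrite e; set G0 := T (B 0 1 q).
have hG0 : in_M G0 by exact: hTM.
have G01 := inM_01 hG0.
have G1 x : G0 x <= 1 by case/andP: (G01 x).
have G0p x : 0 <= G0 x by case/andP: (G01 x).
case: (hG0) => G0m _.
apply/le_anti/andP; split.
  apply: Tu_le => // z uz; apply: G0m.
  rewrite -(hpsi z); apply: (strict_mono phs).
  apply: (strict_refl vst); apply: (strict_refl phs).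
  by rewrite -cm hpsi v0.
by apply: Tu_ge => //; rewrite cm v0.
Qed.

Lemma B_st_left {R : realType} (a s b q : R) : a <= s -> 0 <= q ->
  forall x, B s b q x <= B a b q x.
Proof.
move=> as_ q0 x; rewrite /B; case: (ltP x s) => xs; case: (ltP x a) => xa //.
all: try by case: ifP => _; rewrite ?lexx ?ler01.
all: try by move: (le_lt_trans (le_trans as_ xs) xa); rewrite ltxx.
Qed.

Lemma mid_val {R : realType} {T : (R -> R) -> (R -> R)} {phi psi : R -> R}
  (hTM : forall F, in_M F -> in_M (T F)) (hTmono : monotone_op T)
  (hphi : forall y, T (B y y 1) = B (phi y) (phi y) 1)
  (phs : forall x y, x < y -> phi x < phi y)
  (hpsi : forall y, phi (psi y) = y)
  (h2 : forall v, utility v -> exists u, utility u /\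
      eq_on_M (fun F => Tu u (T F)) (fun F => T (Tu v F)))
  a b q t : a < b -> 0 <= q <= 1 -> phi a <= t -> t < phi b ->
  T (B a b q) t = T (B 0 1 q) (phi 0).
Proof.
move=> ab q01 at_ tb.
have lv := left_val hTM hphi phs hpsi h2.
set s := psi t.
have ts : t = phi s by rewrite hpsi.
have as_ : a <= s by apply: (strict_refl phs); rewrite -ts.
have sb : s < b.
  rewrite ltNge; apply/negP => /(strict_mono phs); rewrite -ts leNgt tb //.
case: (eqVneq a s) => [eas|nas].
  by rewrite ts -eas lv.
have a_s : a < s by rewrite lt_neqAle nas as_.
case/andP: (q01) => q0 q1.
have hBa : in_M (B a b q) by apply: B_inM => //; exact: ltW.
have hBs : in_M (B s b q) by apply: B_inM => //; exact: ltW.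
apply/le_anti/andP; split; last first.
  have := hTmono _ _ hBa hBs (@B_st_left _ a s b q as_ q0) t.
  by rewrite ts lv.
set k := (b - a) / (b - s).
have k0 : 0 < k by apply: divr_gt0; rewrite subr_gt0.
set v := fun z => Num.max a (a + (z - s) * k).
have hv : utility v.
  split.
    move=> x y xy; apply: le_max2 => //; rewrite lerD2l ler_pM2r // lerD2r //.
  move=> x; apply: (@continuous_max _ _ (fun _ => a) (fun z => a + (z - s) * k)).
    exact: cvg_cst.
  apply: cvgD; first exact: cvg_cst.
  apply: cvgM; last exact: cvg_cst.
  apply: cvgB; [exact: cvg_id | exact: cvg_cst].
have va : v a = a.
  rewrite /v max_l // gerDl; apply: mulr_le0_ge0; [rewrite subr_le0; exact: ltW | exact: ltW].
have vs : v s = a by rewrite /v subrr mul0r addr0 max_l.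
have vb : v b = b.
  rewrite /v /k mulrCA mulfV ?mulr1 ?subrKC ?max_r //; first exact: ltW.
  by rewrite subr_eq0 gt_eqF.
have [u [hu huv]] := h2 _ hv.
have cm := comm_phi hphi hu hv huv.
set G := T (B a b q).
have hG : in_M G by exact: hTM.
have G01 := inM_01 hG.
have G1 x : G x <= 1 by case/andP: (G01 x).
have e : G = Tu u G.
  rewrite (huv _ hBa) /= TuB ?va ?vb //; [by case: hv | exact: ltW].
have := @Tu_ge _ u G (phi a) t G1.
rewrite -e /G (lv a b q) // => h; apply: h; by rewrite ts cm vs.
Qed.

Lemma main_eq {R : realType} {T : (R -> R) -> (R -> R)} {phi psi : R -> R}
  (hTM : forall F, in_M F -> in_M (T F)) (hTmono : monotone_op T)
  (hphi : forall y, T (B y y 1) = B (phi y) (phi y) 1)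
  (phs : forall x y, x < y -> phi x < phi y)
  (hpsi : forall y, phi (psi y) = y)
  (h2 : forall v, utility v -> exists u, utility u /\
      eq_on_M (fun F => Tu u (T F)) (fun F => T (Tu v F)))
  F : in_M F -> T F = Td (fun q => T (B 0 1 q) (phi 0)) (Tu phi F).
Proof.
move=> hF.
have lv := left_val hTM hphi phs hpsi h2.
have mv := mid_val hTM hTmono hphi phs hpsi h2.
have F01 := inM_01 hF.
case: (hF) => Fm [_ [aF [bF [haF hbF]]]].
rewrite (Tu_hom _ _ _ phs hpsi Fm F01); apply/funext => x; rewrite /Td.
set G := T F.
have hG : in_M G by exact: hTM.
case: (hG) => Gm [Grc _].
apply/esym/(cvg_lim (@Rhausdorff R)).
apply: (@squeeze_cvgr _ _ _ _ (fun _ => G x) G); last 2 first.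
- exact: cvg_cst.
- exact: Grc.
near=> y.
have xy : x < y by near: y; exact: nbhs_right_gt.
rewrite /=.
set s := psi y; set p := F s.
have p01 : 0 <= p <= 1 by exact: F01.
have ys : y = phi s by rewrite hpsi.
apply/andP; split.
- set a' := Num.min aF (psi x) - 1.
  have a'x : a' < psi x.
    have m1 : Num.min aF (psi x) <= psi x by rewrite ge_min lexx orbT.
    rewrite /a'; lra.
  have a'F : a' < aF.
    have m1 : Num.min aF (psi x) <= aF by rewrite ge_min lexx.
    rewrite /a'; lra.
  have xs : psi x < s.
    rewrite ltNge; apply/negP => /(strict_mono phs); rewrite -ys hpsi leNgt xy //.
  have a's : a' < s by exact: lt_trans a'x xs.
  have hL : in_M (B a' s p) by apply: B_inM => //; exact: ltW.
  have st : st_le (B a' s p) F.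
    move=> z; rewrite /B; case: ltP => za.
      by rewrite haF // (lt_trans za a'F).
    case: ltP => zs; last by case/andP: (F01 z).
    by apply: Fm; exact: ltW.
  have := hTmono _ _ hL hF st x; rewrite -/G => h; apply: (le_trans h).
  rewrite mv //; last by rewrite -ys.
  by have := phs _ _ a'x; rewrite hpsi => /ltW.
- set b' := Num.max bF s + 1.
  have m1 : s <= Num.max bF s by rewrite le_max lexx orbT.
  have m2 : bF <= Num.max bF s by rewrite le_max lexx.
  have sb : s < b' by rewrite /b'; lra.
  have bb : bF < b' by rewrite /b'; lra.
  have hU : in_M (B s b' p) by apply: B_inM => //; exact: ltW.
  have st : st_le F (B s b' p).
    move=> z; rewrite /B; case: ltP => zs; first by case/andP: (F01 z).
    case: ltP => zb; first by apply: Fm.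
    by rewrite hbF // ltW // (lt_le_trans bb zb).
  have := hTmono _ _ hF hU st y; rewrite -/G => h; apply: le_trans h.
  by rewrite ys lv.
Unshelve. all: end_near.
Qed.

Lemma B_st_q {R : realType} (a b q q' : R) : q <= q' -> forall t, B a b q t <= B a b q' t.
Proof. by move=> qq t; rewrite /B; case: ifP => _; [|case: ifP => _]. Qed.

Lemma forward {R : realType} (T : (R -> R) -> (R -> R))
  (hTM : forall F, in_M F -> in_M (T F)) (hTmono : monotone_op T) :
  UT_eq_TU T ->
  exists (d u : R -> R),
    [/\ distortion d, utility u,
        (forall x y, x < y -> u x < u y),
        (forall z, exists x, u x = z) &
        eq_on_M T (fun F => Td d (Tu u F))].
Proof.
case=> h1 h2.
have hex := dl_exists _ hTM h1.
have hall := dl_all _ hTM hTmono hex.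
have [phi hphi] := choice hall.
have phim : {homo phi : x y / x <= y}.
  move=> x y xy.
  have := hTmono _ _ (B1_inM x) (B1_inM y) (dl_le xy) (phi y).
  rewrite !hphi /B ltxx; case: ltP => // _ h; exfalso; clear -h; lra.
have phis : forall z, exists x, phi x = z.
  move=> z; have [y hy] := hex z; exists y; apply: dl_inj; by rewrite -hphi.
have phs := phi_strict _ _ hphi phim phis h2.
have [psi hpsi] := choice phis.
exists (fun q => T (B 0 1 q) (phi 0)), phi; split => //.
- split.
    move=> x y x0 xy y1.
    have hx : in_M (B 0 1 x : R -> R) by apply: B_inM; rewrite ?ler01 // x0 (le_trans xy y1).
    have hy : in_M (B 0 1 y : R -> R) by apply: B_inM; rewrite ?ler01 // y1 (le_trans x0 xy).
    exact: (hTmono _ _ hy hx (B_st_q 0 1 _ _ xy) (phi 0)).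
  split.
    move=> x x0 x1.
    have hx : in_M (B 0 1 x : R -> R) by apply: B_inM; rewrite ?ler01 // x0 x1.
    by have /andP := inM_01 (hTM _ hx) (phi 0).
  have p01 : phi 0 < phi 1 by apply: phs; exact: ltr01.
  split.
    have -> : (B 0 1 0 : R -> R) = B 1 1 1.
      apply/funext => t; rewrite /B; case: (ltP t 0) => t0; case: (ltP t 1) => t1 //.
      by move: (le_lt_trans t1 t0); rewrite ltNge ler01.
    by rewrite hphi /B p01.
  have -> : (B 0 1 1 : R -> R) = B 0 0 1.
    by apply/funext => t; rewrite /B; case: ifP => _ //; case: ifP.
  by rewrite hphi /B ltxx.
- split; first exact: strict_mono phs.
  exact: mono_surj_cont (strict_mono phs) phis.
- move=> F hF; exact: (main_eq hTM hTmono hphi phs hpsi h2 F hF).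
Qed.

Lemma closed_max {R : realType} (w : R -> R) t : utility w ->
  (exists z, w z <= t) -> (exists z, t < w z) ->
  exists m, w m <= t /\ forall z, w z <= t -> z <= m.
Proof.
case=> wm wc [z0 hz0] [z1 hz1].
set S := [set z | w z <= t].
have Sub : ubound S z1.
  move=> z Sz; rewrite leNgt; apply/negP => /ltW /wm h.
  by move: (le_lt_trans (le_trans h Sz) hz1); rewrite ltxx.
have hs : has_sup S by split; [exists z0 | exists z1].
exists (sup S); split; last by move=> z hz; exact: sup_upper_bound.
rewrite leNgt; apply/negP => hm.
have := @cvgr_gt _ _ _ _ _ (w (sup S)) (wc (sup S)) _ hm.
move=> hn; have /nbhs_ballP[e e0 he] : nbhs (sup S) (fun x => t < w x) by exact: hn.
have [s Ss hs'] := sup_adherent e0 hs.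
have sm : s <= sup S by exact: sup_upper_bound.
have : ball (sup S) e s.
  rewrite -ball_normE /ball_ /= ger0_norm ?subr_ge0 //; lra.
move/he => /= h.
by move: (lt_le_trans h Ss); rewrite ltxx.
Qed.

Lemma Tu_M {R : realType} (v F : R -> R) : utility v -> in_M F -> in_M (Tu v F).
Proof.
move=> hv hF; case: (hv) => vm vc.
have F01 := inM_01 hF.
have F1 x : F x <= 1 by case/andP: (F01 x).
have F0 x : 0 <= F x by case/andP: (F01 x).
case: (hF) => Fm [Frc [aF [bF [haF hbF]]]].
set G := Tu v F.
have G0 t : 0 <= G t by exact: Tu_ge0.
have G1 t : G t <= 1 by apply: Tu_le => //; exact: ler01.
have Gm : {homo G : x y / x <= y}.
  move=> x y xy; apply: Tu_le => // z hz; apply: Tu_ge => //; exact: le_trans hz xy.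
have Gzero t : t < v aF -> G t = 0.
  move=> ta; apply/le_anti; rewrite G0 andbT; apply: Tu_le => // z hz.
  rewrite haF //; rewrite ltNge; apply/negP => /vm h.
  by move: (le_lt_trans (le_trans h hz) ta); rewrite ltxx.
have Gone t : v bF <= t -> G t = 1.
  move=> bt; apply/le_anti; rewrite G1 /=.
  by rewrite -(hbF bF) // ; apply: Tu_ge.
split => //; split; last first.
  exists (v aF), (v bF); split; [exact: Gzero | exact: Gone].
move=> t.
have [A|nA] := pselect (forall z, t < v z).
  have ta : t < v aF by exact: A.
  rewrite Gzero //; apply: cvg_near_cst; near=> s; apply: Gzero.
  by near: s; exact: nbhs_right_lt.
have [z0 hz0] : exists z, v z <= t.
  apply/not_existsP => hn; apply: nA => z; rewrite ltNge; exact/negP/hn.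
have [B1|nB] := pselect (forall z, v z <= t).
  rewrite Gone //; apply: cvg_near_cst; near=> s; apply: Gone.
  apply: le_trans (B1 bF) _; near: s; exact: nbhs_right_ge.
have [z1 hz1] : exists z, t < v z.
  apply/not_existsP => hn; apply: nB => z; rewrite leNgt; exact/negP/hn.
have [m [vm_ hm]] := closed_max _ _ hv (ex_intro _ z0 hz0) (ex_intro _ z1 hz1).
have Gt : G t = F m.
  apply/le_anti/andP; split; last exact: Tu_ge.
  by apply: Tu_le => // z hz; apply: Fm; exact: hm.
rewrite Gt; apply/cvgrPdist_lt => e e0.
have hn := proj1 (cvgrPdist_lt _ _) (Frc m) e e0.
have [y [hy my]] : exists y, `|F m - F y| < e /\ m < y.
  apply: (@filter_ex _ (m^'+) _ (fun y => `|F m - F y| < e /\ m < y)).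
  near=> y; split; [near: y; exact: hn | near: y; exact: nbhs_right_gt].
have ty : t < v y.
  rewrite ltNge; apply/negP => /hm; rewrite leNgt my //.
near=> s.
have ts : t <= s by near: s; exact: nbhs_right_ge.
have sy : s < v y by near: s; exact: nbhs_right_lt.
have lo : F m <= G s by rewrite -Gt; exact: Gm.
have up : G s <= F y.
  apply: Tu_le => // z hz; apply: Fm; rewrite leNgt; apply/negP => yz.
  have := vm _ _ (ltW yz); move=> h; by move: (le_lt_trans (le_trans h hz) sy); rewrite ltxx.
move: hy; rewrite !ltr_norml => /andP[h1 h2].
apply/andP; split; lra.
Unshelve. all: end_near.
Qed.

Lemma K_facts {R : realType} (d H : R -> R) : distortion d ->
  {homo H : x y / x <= y} -> (forall x, 0 <= H x <= 1) ->
  forall x, [/\ (d \o H) y @[y --> x^'+] --> Td d H x,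
     (forall y, x < y -> Td d H x <= d (H y)),
     d (H x) <= Td d H x &
     (forall y, x <= y -> Td d H x <= Td d H y)].
Proof.
move=> [dm [d01 [d0 d1]]] Hm H01.
have DHm x y : x <= y -> d (H x) <= d (H y).
  move=> xy; have /andP[a0 a1] := H01 x; have /andP[b0 b1] := H01 y.
  by apply: dm => //; exact: Hm.
have DH0 x : 0 <= d (H x) by have /andP[a0 a1] := H01 x; case: (d01 _ a0 a1).
have cv x : (d \o H) y @[y --> x^'+] --> Td d H x.
  apply: nondecreasing_at_right_is_cvgr.
    near=> y; move=> a b _ _ ab; exact: DHm.
  near=> y; exists 0 => _ [z _ <-]; exact: DH0.
have K1 x y : x < y -> Td d H x <= d (H y).
  move=> xy; apply: limr_le; first exact: cvgP (cv x).
  near=> z; apply: DHm; apply: ltW; near: z; exact: nbhs_right_lt.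
have K2 x : d (H x) <= Td d H x.
  apply: limr_ge; first exact: cvgP (cv x).
  near=> z; apply: DHm; near: z; exact: nbhs_right_ge.
move=> x; split; [exact: (cv x) | exact: K1 | exact: K2 |].
move=> y; rewrite le_eqVlt => /orP[/eqP->|xy]; first exact: lexx.
exact: le_trans (K1 _ _ xy) (K2 y).
Unshelve. all: end_near.
Qed.

Lemma commute_core {R : realType} (d H w : R -> R) (aH bH : R) : distortion d ->
  {homo H : x y / x <= y} -> (forall x, 0 <= H x <= 1) ->
  (forall x, x < aH -> H x = 0) -> (forall x, bH <= x -> H x = 1) ->
  utility w -> Tu w (Td d H) = Td d (Tu w H).
Proof.
move=> hd Hm H01 haH hbH hw.
have KF := K_facts _ _ hd Hm H01.
case: (hd) => dm [d01 [d0 d1]]; case: (hw) => wm wc.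
have H0 x : 0 <= H x by case/andP: (H01 x).
have H1 x : H x <= 1 by case/andP: (H01 x).
have DH1 x : d (H x) <= 1 by case: (d01 _ (H0 x) (H1 x)).
have DH0 x : 0 <= d (H x) by case: (d01 _ (H0 x) (H1 x)).
set K := Td d H.
have K0 x : 0 <= K x by have [_ _ k2 _] := KF x; exact: le_trans (DH0 x) k2.
have K1 x : K x <= 1.
  by have [_ k1 _ _] := KF x; apply: le_trans (k1 (x + 1) _) (DH1 _); rewrite ltrDl.
have Kone x : bH <= x -> K x = 1.
  move=> bx; apply/le_anti; rewrite K1 /=.
  by have [_ _ k2 _] := KF x; rewrite -d1 -(hbH x bx).
set P := Tu w H.
have P0 s : 0 <= P s by exact: Tu_ge0.
have P1 s : P s <= 1 by apply: Tu_le => //; exact: ler01.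
apply/funext => t; rewrite /Td.
apply/esym/(cvg_lim (@Rhausdorff R)).
have [A|nA] := pselect (forall z, t < w z).
  have -> : Tu w K t = 0.
    apply/le_anti; rewrite Tu_ge0 ?andbT //; last by move=> x; rewrite K0 K1.
    apply: Tu_le => // z hz; by move: (lt_le_trans (A z) hz); rewrite ltxx.
  apply: cvg_near_cst; near=> s.
  have sa : s < w aH by near: s; exact: nbhs_right_lt.
  rewrite /=; have -> : P s = 0.
    apply/le_anti; rewrite P0 andbT; apply: Tu_le => // z hz.
    rewrite haH //; rewrite ltNge; apply/negP => /wm h.
    by move: (le_lt_trans (le_trans h hz) sa); rewrite ltxx.
  exact: d0.
have [z0 hz0] : exists z, w z <= t.
  apply/not_existsP => hn; apply: nA => z; rewrite ltNge; exact/negP/hn.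
have [B1|nB] := pselect (forall z, w z <= t).
  have -> : Tu w K t = 1.
    apply/le_anti; rewrite Tu_le ?ler01 //=.
    by rewrite -(Kone bH) ?lexx //; apply: Tu_ge.
  apply: cvg_near_cst; near=> s.
  have ts : t <= s by near: s; exact: nbhs_right_ge.
  rewrite /=; have -> : P s = 1.
    apply/le_anti; rewrite P1 /= -(hbH bH) ?lexx //; apply: Tu_ge => //.
    exact: le_trans (B1 bH) ts.
  exact: d1.
have [z1 hz1] : exists z, t < w z.
  apply/not_existsP => hn; apply: nB => z; rewrite leNgt; exact/negP/hn.
have [m [wm_ hm]] := closed_max _ _ hw (ex_intro _ z0 hz0) (ex_intro _ z1 hz1).
have [kcv k1 k2 km] := KF m.
have -> : Tu w K t = K m.
  apply/le_anti/andP; split; last exact: Tu_ge.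
  by apply: Tu_le => // z hz; have [_ _ _ kz] := KF z; exact: kz _ (hm _ hz).
apply/cvgrPdist_lt => e e0.
have hn := proj1 (cvgrPdist_lt _ _) kcv e e0.
have [y [hy my]] : exists y, `|K m - d (H y)| < e /\ m < y.
  apply: (@filter_ex _ (m^'+) _ (fun y => `|K m - d (H y)| < e /\ m < y)).
  near=> y; split; [near: y; exact: hn | near: y; exact: nbhs_right_gt].
have ty : t < w y.
  rewrite ltNge; apply/negP => /hm; rewrite leNgt my //.
near=> s.
have ts : t < s by near: s; exact: nbhs_right_gt.
have sy : s < w y by near: s; exact: nbhs_right_lt.
have up : d (P s) <= d (H y).
  apply: dm => //; apply: Tu_le => // z hz; apply: Hm; rewrite leNgt; apply/negP => yz.
  have := wm _ _ (ltW yz); move=> h; by move: (le_lt_trans (le_trans h hz) sy); rewrite ltxx.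
have lo : K m <= d (P s).
  have ws : w m < s by exact: le_lt_trans wm_ ts.
  have hnear := @cvgr_lt _ _ _ _ _ (w m) (wc m) _ ws.
  have hn2 : nbhs m (fun x => w x < s) by exact: hnear.
  have [z [hz mz]] : exists z, w z < s /\ m < z.
    apply: (@filter_ex _ (m^'+) _ (fun z => w z < s /\ m < z)).
    near=> z; split; last by near: z; exact: nbhs_right_gt.
    by near: z; apply: filterS hn2 => x hx _.
  apply: le_trans (k1 z mz) _; apply: dm => //.
  by apply: Tu_ge => //; exact: ltW.
move: hy; rewrite /= !ltr_norml => /andP[h1 h2].
apply/andP; split; lra.
Unshelve. all: end_near.
Qed.

Lemma comp_util {R : realType} (f g h : R -> R) : utility f -> utility g -> utility h ->
  utility (fun z => f (g (h z))).
Proof.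
case=> fm fc [gm gc] [hm hc]; split.
  by move=> x y xy; apply: fm; apply: gm; apply: hm.
move=> x; exact: (continuous_comp (continuous_comp (hc x) (gc _)) (fc _)).
Qed.

Lemma backward {R : realType} (T : (R -> R) -> (R -> R)) :
  (exists (d u : R -> R),
    [/\ distortion d, utility u,
        (forall x y, x < y -> u x < u y),
        (forall z, exists x, u x = z) &
        eq_on_M T (fun F => Td d (Tu u F))]) -> UT_eq_TU T.
Proof.
case=> d [phi [hd hphi phs phis hT]].
have [psi hpsi] := choice phis.
have psiphi x : psi (phi x) = x.
  by apply/le_anti/andP; split; apply: (strict_refl phs); rewrite hpsi lexx.
have pss : forall x y, x < y -> psi x < psi y.
  move=> x y xy; rewrite ltNge; apply/negP => /(strict_mono phs); rewrite !hpsi leNgt xy //.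
have hpsiu : utility psi.
  split; first exact: strict_mono pss.
  exact: (mono_surj_cont psi (strict_mono pss) (fun z => ex_intro _ (phi z) (psiphi z))).
have key : forall w, utility w ->
    eq_on_M (fun F => Tu w (T F)) (fun F => T (Tu (fun z => psi (w (phi z))) F)).
  move=> w hw F hF.
  set v := fun z => psi (w (phi z)).
  have hv : utility v by exact: (comp_util _ _ _ hpsiu hw hphi).
  have F01 := inM_01 hF.
  case: (hF) => Fm [_ [aF [bF [haF hbF]]]].
  have hG := Tu_M _ _ hv hF.
  have G01 := inM_01 hG.
  case: (hG) => Gm _.
  rewrite /= (hT F hF) (hT _ hG) (Tu_hom _ _ _ phs hpsi Fm F01).
  rewrite (Tu_hom _ _ _ phs hpsi Gm G01).
  set H := fun y => F (psi y).
  have H01 x : 0 <= H x <= 1 by exact: F01.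
  have H1 x : H x <= 1 by case/andP: (H01 x).
  have -> : (fun y => Tu v F (psi y)) = Tu w H.
    apply/funext => s; apply/le_anti/andP; split.
      apply: Tu_le; first exact: Tu_ge0.
      move=> z hz; rewrite -(psiphi z); apply: Tu_ge => //.
      by apply: (strict_refl pss); exact: hz.
    apply: Tu_le; first by have /andP[] := G01 (psi s).
    move=> z hz; rewrite /H; apply: (@Tu_ge _ v F (psi s) (psi z)); first by move=> x; have /andP[] := F01 x.
    by rewrite /v hpsi; apply: (strict_mono pss).
  apply: (commute_core _ _ _ (phi aF) (phi bF)) => //.
  - by move=> x y xy; apply: Fm; apply: (strict_mono pss).
  - move=> x xa; apply: haF; rewrite -(psiphi aF); exact: pss.
  - move=> x bx; apply: hbF; rewrite -(psiphi bF); exact: (strict_mono pss).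
split.
  move=> w hw; exists (fun z => psi (w (phi z))); split; first exact: (comp_util _ _ _ hpsiu hw hphi).
  exact: key.
move=> v hv; exists (fun z => phi (v (psi z))); split; first exact: (comp_util _ _ _ hphi hv hpsiu).
have := key _ (comp_util _ _ _ hphi hv hpsiu).
have -> // : (fun z => psi (phi (v (psi (phi z))))) = v.
by apply/funext => z; rewrite psiphi psiphi.
Qed.

Theorem theorem3 (R : realType) (T : (R -> R) -> (R -> R))
  (hTM : forall F, in_M F -> in_M (T F))
  (hTmono : monotone_op T) :
  UT_eq_TU T <->
  exists (d u : R -> R),
    [/\ distortion d, utility u,
        (forall x y, x < y -> u x < u y),
        (forall z, exists x, u x = z) &
        eq_on_M T (fun F => Td d (Tu u F))].
Proof.
split; [exact: forward | exact: backward].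
Qed.
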